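(* Let $W(D_4)\subset\mathrm{O}_4(\mathbb R)$ be the group of matrices $D\cdot P(\pi)$ with $D=\mathrm{diag}(\varepsilon_1,\dots,\varepsilon_4)$, $\varepsilon_i=\pm1$, $\prod\varepsilon_i=1$, $P(\pi)$ the permutation matrix of $\pi\in\mathfrak S_4$, let $$\rho=\tfrac12\begin{pmatrix}-1&1&1&1\\-1&-1&1&-1\\-1&-1&-1&1\\-1&1&-1&-1\end{pmatrix},$$ and let $\tilde\rho$ be the automorphism $x\mapsto\rho x\rho^{-1}$ of $W(D_4)$. Then $\mathrm{Fix}(\tilde\rho)=\{x\in W(D_4)\mid\rho x\rho^{-1}=x\}$ is isomorphic to the group $\mathbb H^1$ of Hurwitz integral quaternions of norm $1$, a group of order $24$ isomorphic to $\mathfrak Q_8\rtimes\mathfrak C_3$, and this group is isomorphic to the double covering $\tilde{\mathfrak A}_4$ of $\mathfrak A_4$.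
   Context: $\mathbb H^1=\{\pm1,\pm i,\pm j,\pm k\}\cup\{\tfrac12(\pm1\pm i\pm j\pm k)\}$ inside the real quaternions; $\mathfrak Q_8$ is the quaternion group of order $8$, $\mathfrak C_3$ the cyclic group of order $3$ acting by conjugation with $-\tfrac12(1+i+j+k)$, and $\tilde{\mathfrak A}_4$ is the binary tetrahedral group (the nonsplit central extension of $\mathfrak A_4$ by a group of order $2$). *)

(* Defs.v *)
From HB Require Import structures.
From mathcomp Require Import all_boot all_order all_algebra all_fingroup all_solvable.
From mathcomp Require Import alt.
Set Implicit Arguments. Unset Strict Implicit. Unset Printing Implicit Defensive.
Import Order.TTheory GRing.Theory Num.Theory.
Local Open Scope ring_scope.

Definition iso_on {A B : Type} (GA : A -> Prop) (mA : A -> A -> A)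
  (GB : B -> Prop) (mB : B -> B -> B) : Prop :=
  exists f : A -> B,
    [/\ forall x, GA x -> GB (f x),
        forall x y, GA x -> GA y -> f x = f y -> x = y,
        forall y, GB y -> exists2 x, GA x & f x = y
      & forall x y, GA x -> GA y -> f (mA x y) = mB (f x) (f y)].

Definition WD4 (x : 'M[rat]_4) : Prop :=
  exists (e : 'I_4 -> rat) (s : 'S_4),
    [/\ forall i, e i = 1 \/ e i = -1,
        \prod_(i < 4) e i = 1
      & x = diag_mx (\row_i e i) *m perm_mx s].

Definition rho_rows : seq (seq rat) :=
  [:: [:: -1;  1;  1;  1];
      [:: -1; -1;  1; -1];
      [:: -1; -1; -1;  1];
      [:: -1;  1; -1; -1]].

Definition rho : 'M[rat]_4 :=
  \matrix_(i < 4, j < 4) (nth 0 (nth [::] rho_rows i) j / 2).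

Definition FixRho (x : 'M[rat]_4) : Prop :=
  WD4 x /\ rho *m x *m invmx rho = x.

(* (a, b, c, d) stands for a + b i + c j + d k *)
Definition quat := (rat * rat * rat * rat)%type.
Definition qa (q : quat) := q.1.1.1.
Definition qb (q : quat) := q.1.1.2.
Definition qc (q : quat) := q.1.2.
Definition qd (q : quat) := q.2.
Definition Q (a b c d : rat) : quat := (a, b, c, d).

Definition qmul (p q : quat) : quat :=
  Q (qa p * qa q - qb p * qb q - qc p * qc q - qd p * qd q)
    (qa p * qb q + qb p * qa q + qc p * qd q - qd p * qc q)
    (qa p * qc q - qb p * qd q + qc p * qa q + qd p * qb q)
    (qa p * qd q + qb p * qc q - qc p * qb q + qd p * qa q).

Definition qconj (q : quat) : quat := Q (qa q) (- qb q) (- qc q) (- qd q).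
Definition qnorm (q : quat) : rat := qa q ^+ 2 + qb q ^+ 2 + qc q ^+ 2 + qd q ^+ 2.

Definition hurwitz (q : quat) : bool :=
  [&& qa q \is a Num.int, qb q \is a Num.int, qc q \is a Num.int & qd q \is a Num.int]
  || [&& qa q - 1/2 \is a Num.int, qb q - 1/2 \is a Num.int,
         qc q - 1/2 \is a Num.int & qd q - 1/2 \is a Num.int].

Definition H1 (q : quat) : bool := hurwitz q && (qnorm q == 1).

Definition Q8list : seq quat :=
  [:: Q 1 0 0 0; Q (-1) 0 0 0; Q 0 1 0 0; Q 0 (-1) 0 0;
      Q 0 0 1 0; Q 0 0 (-1) 0; Q 0 0 0 1; Q 0 0 0 (-1)].
Definition Q8 (q : quat) : bool := q \in Q8list.

(* omega = -1/2 (1 + i + j + k), of order 3 *)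
Definition omega : quat := Q (-(1/2)) (-(1/2)) (-(1/2)) (-(1/2)).
Definition qpow (q : quat) (n : nat) : quat := iter n (qmul q) (Q 1 0 0 0).

Definition c3act (c : nat) (q : quat) : quat :=
  qmul (qmul (qpow omega c) q) (qconj (qpow omega c)).

(* external semidirect product Q_8 x| C_3, C_3 = Z/3 written additively *)
Definition SD (x : quat * nat) : Prop := Q8 x.1 /\ (x.2 < 3)%N.
Definition sdmul (x y : quat * nat) : quat * nat :=
  (qmul x.1 (c3act x.2 y.1), ((x.2 + y.2) %% 3)%N).

(* ---------- binary tetrahedral group: nonsplit central extension of A_4 by C_2 ---- *)
Definition nonsplit_central_ext_A4 {A : Type} (G : A -> Prop) (m : A -> A -> A) (e : A)
  : Prop :=
  exists pi : A -> {perm 'I_4},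
    [/\
        forall x, G x -> pi x \in ('Alt_('I_4))%g,
        forall x y, G x -> G y -> pi (m x y) = (pi x * pi y)%g,
        forall s, s \in ('Alt_('I_4))%g -> exists2 x, G x & pi x = s,
        (exists z, [/\ G z, z <> e, pi z = 1%g, pi e = 1%g &
           forall x, G x -> pi x = 1%g -> x = e \/ x = z]) /\
        (forall z x, G z -> pi z = 1%g -> G x -> m z x = m x z)
      &
        ~ (exists sec : {perm 'I_4} -> A,
             [/\ forall s, s \in ('Alt_('I_4))%g -> G (sec s),
                 forall s, s \in ('Alt_('I_4))%g -> pi (sec s) = s
               & forall s t, s \in ('Alt_('I_4))%g -> t \in ('Alt_('I_4))%g ->
                   sec (s * t)%g = m (sec s) (sec t)])].

(* Main.v *)
Require Import Defs.
From HB Require Import structures.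
From mathcomp Require Import all_boot all_order all_algebra all_fingroup all_solvable.
From mathcomp Require Import alt.
From mathcomp Require Import zify ring lra.
Import Order.TTheory GRing.Theory Num.Theory.
Local Open Scope ring_scope.
Set Implicit Arguments. Unset Strict Implicit. Unset Printing Implicit Defensive.

Definition o0 : 'I_4 := @Ordinal 4 0 isT.
Definition o1 : 'I_4 := @Ordinal 4 1 isT.
Definition o2 : 'I_4 := @Ordinal 4 2 isT.
Definition o3 : 'I_4 := @Ordinal 4 3 isT.
Definition ords : seq 'I_4 := [:: o0; o1; o2; o3].

Lemma ordsP (i : 'I_4) : i = o0 \/ i = o1 \/ i = o2 \/ i = o3.
Proof.
case: i => [[|[|[|[|k]]]] Hk].
- by left; apply: val_inj.
- by right; left; apply: val_inj.
- by right; right; left; apply: val_inj.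
- by right; right; right; apply: val_inj.
- by [].
Qed.

Lemma mem_ords (i : 'I_4) : i \in ords.
Proof. by case: (ordsP i) => [->|[->|[->|->]]]. Qed.

Lemma sum4 (F : 'I_4 -> rat) : \sum_(k < 4) F k = F o0 + F o1 + F o2 + F o3.
Proof.
rewrite !big_ord_recl big_ord0 addr0 !addrA /=.
by congr (_ + _ + _ + _); congr F; apply: val_inj.
Qed.

Lemma prod4 (F : 'I_4 -> rat) : \prod_(k < 4) F k = F o0 * F o1 * F o2 * F o3.
Proof.
rewrite !big_ord_recl big_ord0 mulr1 !mulrA /=.
by congr (_ * _ * _ * _); congr F; apply: val_inj.
Qed.
Definition H1list : seq quat := [:: Q (1) (0) (0) (0);
  Q (-1) (0) (0) (0);
  Q (0) (1) (0) (0);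
  Q (0) (-1) (0) (0);
  Q (0) (0) (1) (0);
  Q (0) (0) (-1) (0);
  Q (0) (0) (0) (1);
  Q (0) (0) (0) (-1);
  Q (1/2) (1/2) (1/2) (1/2);
  Q (1/2) (1/2) (1/2) (-(1/2));
  Q (1/2) (1/2) (-(1/2)) (1/2);
  Q (1/2) (1/2) (-(1/2)) (-(1/2));
  Q (1/2) (-(1/2)) (1/2) (1/2);
  Q (1/2) (-(1/2)) (1/2) (-(1/2));
  Q (1/2) (-(1/2)) (-(1/2)) (1/2);
  Q (1/2) (-(1/2)) (-(1/2)) (-(1/2));
  Q (-(1/2)) (1/2) (1/2) (1/2);
  Q (-(1/2)) (1/2) (1/2) (-(1/2));
  Q (-(1/2)) (1/2) (-(1/2)) (1/2);
  Q (-(1/2)) (1/2) (-(1/2)) (-(1/2));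
  Q (-(1/2)) (-(1/2)) (1/2) (1/2);
  Q (-(1/2)) (-(1/2)) (1/2) (-(1/2));
  Q (-(1/2)) (-(1/2)) (-(1/2)) (1/2);
  Q (-(1/2)) (-(1/2)) (-(1/2)) (-(1/2))].
Definition FixS : seq (seq 'I_4) := [:: [:: o0; o1; o2; o3];
  [:: o0; o1; o2; o3];
  [:: o1; o0; o3; o2];
  [:: o1; o0; o3; o2];
  [:: o2; o3; o0; o1];
  [:: o2; o3; o0; o1];
  [:: o3; o2; o1; o0];
  [:: o3; o2; o1; o0];
  [:: o0; o3; o1; o2];
  [:: o2; o0; o1; o3];
  [:: o1; o3; o2; o0];
  [:: o2; o1; o3; o0];
  [:: o3; o1; o0; o2];
  [:: o3; o0; o2; o1];
  [:: o1; o2; o0; o3];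
  [:: o0; o2; o3; o1];
  [:: o0; o2; o3; o1];
  [:: o1; o2; o0; o3];
  [:: o3; o0; o2; o1];
  [:: o3; o1; o0; o2];
  [:: o2; o1; o3; o0];
  [:: o1; o3; o2; o0];
  [:: o2; o0; o1; o3];
  [:: o0; o3; o1; o2]].
Definition FixE : seq (seq rat) := [:: [:: (1); (1); (1); (1)];
  [:: (-1); (-1); (-1); (-1)];
  [:: (1); (-1); (-1); (1)];
  [:: (-1); (1); (1); (-1)];
  [:: (1); (1); (-1); (-1)];
  [:: (-1); (-1); (1); (1)];
  [:: (1); (-1); (1); (-1)];
  [:: (-1); (1); (-1); (1)];
  [:: (-1); (-1); (-1); (-1)];
  [:: (-1); (1); (1); (-1)];
  [:: (-1); (1); (-1); (1)];
  [:: (1); (-1); (1); (-1)];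
  [:: (-1); (-1); (1); (1)];
  [:: (1); (-1); (-1); (1)];
  [:: (1); (1); (-1); (-1)];
  [:: (-1); (-1); (-1); (-1)];
  [:: (1); (1); (1); (1)];
  [:: (-1); (-1); (1); (1)];
  [:: (-1); (1); (1); (-1)];
  [:: (1); (1); (-1); (-1)];
  [:: (-1); (1); (-1); (1)];
  [:: (1); (-1); (1); (-1)];
  [:: (1); (-1); (-1); (1)];
  [:: (1); (1); (1); (1)]].
Definition PiT : seq (seq 'I_4) := [:: [:: o0; o1; o2; o3];
  [:: o0; o1; o2; o3];
  [:: o1; o0; o3; o2];
  [:: o1; o0; o3; o2];
  [:: o2; o3; o0; o1];
  [:: o2; o3; o0; o1];
  [:: o3; o2; o1; o0];
  [:: o3; o2; o1; o0];
  [:: o0; o3; o1; o2];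
  [:: o2; o0; o1; o3];
  [:: o1; o3; o2; o0];
  [:: o2; o1; o3; o0];
  [:: o3; o1; o0; o2];
  [:: o3; o0; o2; o1];
  [:: o1; o2; o0; o3];
  [:: o0; o2; o3; o1];
  [:: o0; o2; o3; o1];
  [:: o1; o2; o0; o3];
  [:: o3; o0; o2; o1];
  [:: o3; o1; o0; o2];
  [:: o2; o1; o3; o0];
  [:: o1; o3; o2; o0];
  [:: o2; o0; o1; o3];
  [:: o0; o3; o1; o2]].
Definition SqT : seq (quat * quat) := [:: (Q (1) (0) (0) (0), Q (1) (0) (0) (0));
  (Q (1) (0) (0) (0), Q (0) (1) (0) (0));
  (Q (1/2) (-(1/2)) (1/2) (1/2), Q (1/2) (-(1/2)) (-(1/2)) (1/2));
  (Q (1/2) (1/2) (1/2) (1/2), Q (1/2) (1/2) (1/2) (-(1/2)));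
  (Q (1/2) (1/2) (-(1/2)) (1/2), Q (1/2) (1/2) (-(1/2)) (-(1/2)));
  (Q (1/2) (1/2) (1/2) (1/2), Q (1/2) (-(1/2)) (1/2) (1/2));
  (Q (1/2) (1/2) (1/2) (-(1/2)), Q (1/2) (-(1/2)) (1/2) (-(1/2)));
  (Q (1/2) (1/2) (1/2) (1/2), Q (1/2) (1/2) (-(1/2)) (1/2));
  (Q (0) (1) (0) (0), Q (1/2) (-(1/2)) (-(1/2)) (-(1/2)));
  (Q (0) (1) (0) (0), Q (1/2) (-(1/2)) (-(1/2)) (1/2));
  (Q (0) (1) (0) (0), Q (1/2) (-(1/2)) (1/2) (-(1/2)));
  (Q (0) (1) (0) (0), Q (1/2) (-(1/2)) (1/2) (1/2));
  (Q (0) (1) (0) (0), Q (1/2) (1/2) (-(1/2)) (-(1/2)));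
  (Q (0) (1) (0) (0), Q (1/2) (1/2) (-(1/2)) (1/2));
  (Q (0) (1) (0) (0), Q (1/2) (1/2) (1/2) (-(1/2)));
  (Q (0) (1) (0) (0), Q (1/2) (1/2) (1/2) (1/2));
  (Q (1) (0) (0) (0), Q (1/2) (1/2) (1/2) (1/2));
  (Q (1) (0) (0) (0), Q (1/2) (1/2) (1/2) (-(1/2)));
  (Q (1) (0) (0) (0), Q (1/2) (1/2) (-(1/2)) (1/2));
  (Q (1) (0) (0) (0), Q (1/2) (1/2) (-(1/2)) (-(1/2)));
  (Q (1) (0) (0) (0), Q (1/2) (-(1/2)) (1/2) (1/2));
  (Q (1) (0) (0) (0), Q (1/2) (-(1/2)) (1/2) (-(1/2)));
  (Q (1) (0) (0) (0), Q (1/2) (-(1/2)) (-(1/2)) (1/2));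
  (Q (1) (0) (0) (0), Q (1/2) (-(1/2)) (-(1/2)) (-(1/2)))].
Definition SDT : seq (quat * nat) := [:: (Q (1) (0) (0) (0), 0%N);
  (Q (-1) (0) (0) (0), 0%N);
  (Q (0) (1) (0) (0), 0%N);
  (Q (0) (-1) (0) (0), 0%N);
  (Q (0) (0) (1) (0), 0%N);
  (Q (0) (0) (-1) (0), 0%N);
  (Q (0) (0) (0) (1), 0%N);
  (Q (0) (0) (0) (-1), 0%N);
  (Q (-1) (0) (0) (0), 1%N);
  (Q (0) (-1) (0) (0), 2%N);
  (Q (0) (0) (0) (-1), 2%N);
  (Q (0) (0) (0) (1), 1%N);
  (Q (0) (0) (-1) (0), 2%N);
  (Q (0) (1) (0) (0), 1%N);
  (Q (0) (0) (1) (0), 1%N);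
  (Q (-1) (0) (0) (0), 2%N);
  (Q (1) (0) (0) (0), 2%N);
  (Q (0) (0) (-1) (0), 1%N);
  (Q (0) (-1) (0) (0), 1%N);
  (Q (0) (0) (1) (0), 2%N);
  (Q (0) (0) (0) (-1), 1%N);
  (Q (0) (0) (0) (1), 2%N);
  (Q (0) (1) (0) (0), 2%N);
  (Q (1) (0) (0) (0), 1%N)].
Definition Rlist : seq quat := [:: Q (1) (0) (0) (0);
  Q (0) (1) (0) (0);
  Q (0) (0) (1) (0);
  Q (0) (0) (0) (1);
  Q (1/2) (1/2) (1/2) (1/2);
  Q (1/2) (1/2) (1/2) (-(1/2));
  Q (1/2) (1/2) (-(1/2)) (1/2);
  Q (1/2) (1/2) (-(1/2)) (-(1/2));
  Q (1/2) (-(1/2)) (1/2) (1/2);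
  Q (1/2) (-(1/2)) (1/2) (-(1/2));
  Q (1/2) (-(1/2)) (-(1/2)) (1/2);
  Q (1/2) (-(1/2)) (-(1/2)) (-(1/2))].
Lemma H1list_ok : all (fun q => H1 q) H1list.
Proof. by vm_compute. Qed.
Lemma H1list_uniq : uniq H1list.
Proof. by vm_compute. Qed.

Lemma half_int (x : rat) : (x \is a Num.int) || (x - 1/2 \is a Num.int) ->
  exists w : int, x = w%:~R / 2.
Proof.
case/orP => [/intrP[m ->]|/intrP[m Hm]].
  by exists (2 * m)%R; rewrite intrM; field.
exists (2 * m + 1)%R; rewrite intrD intrM.
have -> : x = m%:~R + 1/2 by rewrite -Hm subrK.
by field.
Qed.

Lemma int_bound (a b c d : int) : a^+2 + b^+2 + c^+2 + d^+2 = 4 ->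
  a \in [:: -2; -1; 0; 1; 2].
Proof.
move=> H; have : (-2 <= a <= 2)%R by apply/andP; split; nia.
by case: a H => [[|[|[|n]]]|[|[|n]]].
Qed.

Definition wl : seq int := [:: -2; -1; 0; 1; 2].

Lemma H1_check : all (fun a => all (fun b => all (fun c => all (fun d =>
   H1 (Q (a%:~R/2) (b%:~R/2) (c%:~R/2) (d%:~R/2)) ==>
   (Q (a%:~R/2) (b%:~R/2) (c%:~R/2) (d%:~R/2) \in H1list)) wl) wl) wl) wl.
Proof. by vm_compute. Qed.

Lemma H1P (q : quat) : H1 q = (q \in H1list).
Proof.
apply/idP/idP; last by move=> Hq; exact: (allP H1list_ok).
move=> Hq; have Hq' := Hq; move: Hq' => /andP[Hh /eqP Hn].
have [wa Ha] : exists w : int, qa q = w%:~R / 2.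
  by apply: half_int; case/orP: Hh => /and4P[? ? ? ?]; apply/orP; [left|right].
have [wb Hb] : exists w : int, qb q = w%:~R / 2.
  by apply: half_int; case/orP: Hh => /and4P[? ? ? ?]; apply/orP; [left|right].
have [wc Hc] : exists w : int, qc q = w%:~R / 2.
  by apply: half_int; case/orP: Hh => /and4P[? ? ? ?]; apply/orP; [left|right].
have [wd Hd] : exists w : int, qd q = w%:~R / 2.
  by apply: half_int; case/orP: Hh => /and4P[? ? ? ?]; apply/orP; [left|right].
have Hq2 : q = Q (wa%:~R/2) (wb%:~R/2) (wc%:~R/2) (wd%:~R/2).
  by rewrite -Ha -Hb -Hc -Hd; case: q {Hq Hh Hn Ha Hb Hc Hd} => [[[? ?] ?] ?].
have HW : wa^+2 + wb^+2 + wc^+2 + wd^+2 = 4.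
  apply: (intr_inj (R:=rat)).
  rewrite /qnorm Ha Hb Hc Hd in Hn.
  rewrite !rmorphD !rmorphXn /=.
  have -> : (wa%:~R : rat)^+2 + wb%:~R^+2 + wc%:~R^+2 + wd%:~R^+2
     = 4 * ((wa%:~R/2)^+2 + (wb%:~R/2)^+2 + (wc%:~R/2)^+2 + (wd%:~R/2)^+2) by field.
  by rewrite Hn mulr1.
have Ea := int_bound HW.
have Eb : wb \in wl.
  by apply: (@int_bound wb wa wc wd); rewrite -HW; ring.
have Ec : wc \in wl.
  by apply: (@int_bound wc wa wb wd); rewrite -HW; ring.
have Ed : wd \in wl.
  by apply: (@int_bound wd wa wb wc); rewrite -HW; ring.
have := H1_check.
move=> /allP /(_ _ Ea) /allP /(_ _ Eb) /allP /(_ _ Ec) /allP /(_ _ Ed).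
by rewrite -Hq2 Hq.
Qed.

Definition lk {T : Type} (d : T) (tab : seq T) (q : quat) : T :=
  nth d tab (index q H1list).

Definition phiSD (y : quat * nat) : quat := qmul y.1 (qpow omega y.2).
Definition fSD (q : quat) : quat * nat := lk (Q 1 0 0 0, 0%N) SDT q.

Lemma C1 : all (fun q => ((fSD q).1 \in Q8list) && ((fSD q).2 < 3)%N
   && (phiSD (fSD q) == q)) H1list.
Proof. by vm_compute. Qed.

Lemma C2 : all (fun x => all (fun y => fSD (qmul x y) == sdmul (fSD x) (fSD y)) H1list) H1list.
Proof. by vm_compute. Qed.

Lemma C3 : all (fun u => all (fun c => (phiSD (u, c) \in H1list) && (fSD (phiSD (u, c)) == (u, c)))
   [:: 0; 1; 2]%N) Q8list.
Proof. by vm_compute. Qed.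

Lemma part3 : iso_on (fun q => H1 q) qmul SD sdmul.
Proof.
exists fSD; split.
- move=> x; rewrite H1P => Hx; have /andP[/andP[? ?] _] := allP C1 x Hx; by split.
- move=> x y; rewrite !H1P => Hx Hy Hxy.
  have /andP[_ /eqP Ex] := allP C1 x Hx; have /andP[_ /eqP Ey] := allP C1 y Hy.
  by rewrite -Ex -Ey Hxy.
- case=> u c [/= Hu Hc].
  have Hc' : c \in [:: 0; 1; 2]%N by case: c Hc => [|[|[|]]].
  have /andP[H1 /eqP H2] := allP (allP C3 u Hu) c Hc'.
  by exists (phiSD (u, c)); rewrite // H1P.
- move=> x y; rewrite !H1P => Hx Hy; exact/eqP/(allP (allP C2 x Hx) y Hy).
Qed.

Lemma part2 : exists s : seq quat, [/\ uniq s, size s = 24%N & forall q, q \in s = H1 q].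
Proof. by exists H1list; split => // q; rewrite H1P. Qed.

Section MkPerm.
Variable sl : seq 'I_4.
Hypothesis H : uniq sl && (size sl == 4%N).
Lemma mk_inj : injective (fun i : 'I_4 => nth o0 sl i).
Proof.
move=> i j /eqP; case/andP: H => Hu /eqP Hs.
rewrite nth_uniq ?Hs // => /eqP; exact: val_inj.
Qed.
End MkPerm.

Definition mkperm_aux (sl : seq 'I_4) (b : bool) :
   uniq sl && (size sl == 4%N) = b -> {perm 'I_4} :=
  match b return uniq sl && (size sl == 4%N) = b -> {perm 'I_4} with
  | true => fun H => perm (@mk_inj sl H)
  | false => fun _ => 1%g
  end.
Definition mkperm (sl : seq 'I_4) : {perm 'I_4} := @mkperm_aux sl _ (erefl _).

Lemma mkpermE sl : uniq sl && (size sl == 4%N) -> forall i, mkperm sl i = nth o0 sl i.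
Proof.
move=> H i; rewrite /mkperm.
move: (erefl (uniq sl && (size sl == 4%N))).
rewrite {2 3}H => E /=; by rewrite permE.
Qed.

Definition pif (q : quat) : seq 'I_4 := lk [::] PiT q.
Fact pi_key : unit. Proof. exact: tt. Qed.
Definition pi : quat -> {perm 'I_4} := locked_with pi_key (fun q => mkperm (pif q)).

Lemma Pvalid : all (fun q => uniq (pif q) && (size (pif q) == 4%N)) H1list.
Proof. by vm_compute. Qed.

Lemma piE q : q \in H1list -> forall i, pi q i = nth o0 (pif q) i.
Proof. by move=> Hq; rewrite /pi locked_withE /=; apply: mkpermE; exact: (allP Pvalid). Qed.

Lemma Hclosed : all (fun x => all (fun y => qmul x y \in H1list) H1list) H1list.
Proof. by vm_compute. Qed.

Lemma Phom_chk : all (fun x => all (fun y => all (fun i : 'I_4 =>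
   nth o0 (pif (qmul x y)) i == nth o0 (pif y) (nth o0 (pif x) i)) ords) H1list) H1list.
Proof. by vm_compute. Qed.

Lemma pi_hom x y : x \in H1list -> y \in H1list -> pi (qmul x y) = (pi x * pi y)%g.
Proof.
move=> Hx Hy; apply/permP => i; rewrite permM.
have Hxy := allP (allP Hclosed x Hx) y Hy.
rewrite (piE Hxy) (piE Hx) (piE Hy).
exact/eqP/(allP (allP (allP Phom_chk x Hx) y Hy) i (mem_ords i)).
Qed.

Lemma Sq_chk : all (fun x => let yz := lk (x, x) SqT x in
   [&& yz.1 \in H1list, yz.2 \in H1list &
       x == qmul (qmul yz.1 yz.1) (qmul yz.2 yz.2)]) H1list.
Proof. by vm_compute. Qed.

Lemma pi_alt x : x \in H1list -> pi x \in ('Alt_('I_4))%g.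
Proof.
move=> Hx; have /and3P[Hy Hz /eqP E] := allP Sq_chk x Hx.
set y := (lk (x, x) SqT x).1 in Hy E *; set z := (lk (x, x) SqT x).2 in Hz E *.
have Hyy := allP (allP Hclosed y Hy) y Hy; have Hzz := allP (allP Hclosed z Hz) z Hz.
rewrite E pi_hom // !pi_hom // Alt_even !odd_permM !addbb.
by [].
Qed.

Lemma Rsub : all (fun q => q \in H1list) Rlist.
Proof. by vm_compute. Qed.

Lemma Rinj_chk : all (fun x => all (fun y =>
   (map (fun i : 'I_4 => nth o0 (pif x) i) ords == map (fun i : 'I_4 => nth o0 (pif y) i) ords) ==> (x == y)) Rlist) Rlist.
Proof. by vm_compute. Qed.

Lemma Runiq : uniq Rlist.
Proof. by vm_compute. Qed.

Lemma map_pi_uniq : uniq (map pi Rlist).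
Proof.
rewrite map_inj_in_uniq ?Runiq // => x y Hx Hy E.
have Hx' := allP Rsub x Hx; have Hy' := allP Rsub y Hy.
apply/eqP; apply: (implyP (allP (allP Rinj_chk x Hx) y Hy)).
apply/eqP/eq_map => i /=.
have Ha := piE Hx' i; have Hb := piE Hy' i; rewrite E in Ha.
exact: (etrans (esym Ha) Hb).
Qed.

Lemma card_Alt4 : #|('Alt_('I_4))%g| = 12%N.
Proof.
have := @card_Alt 'I_4; rewrite card_ord => /(_ isT) H.
have H' : (2 * #|('Alt_('I_4))%g| = 24)%N by rewrite H.
lia.
Qed.

Lemma Alt_im : ('Alt_('I_4))%g = [set s in map pi Rlist].
Proof.
apply/eqP; rewrite eq_sym eqEcard; apply/andP; split.
  apply/subsetP => s; rewrite inE => /mapP[q Hq ->].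
  exact: pi_alt (allP Rsub q Hq).
rewrite card_Alt4 cardsE (card_uniqP map_pi_uniq) size_map.
by [].
Qed.

Definition e1 : quat := Q 1 0 0 0.
Definition m1 : quat := Q (-1) 0 0 0.

Lemma ker_chk : all (fun x => (map (fun i : 'I_4 => nth o0 (pif x) i) ords == ords) ==> ((x == e1) || (x == m1)))
   H1list.
Proof. by vm_compute. Qed.

Lemma pi_ker x : x \in H1list -> pi x = 1%g -> x = e1 \/ x = m1.
Proof.
move=> Hx E; have := implyP (allP ker_chk x Hx).
have -> : map (fun i : 'I_4 => nth o0 (pif x) i) ords == ords.
  have Em : (fun i : 'I_4 => nth o0 (pif x) i) =1 pi x by move=> i; rewrite (piE Hx).
  by apply/eqP; rewrite (eq_map Em) E /ords /= !perm1.
by move=> /(_ isT) /orP[/eqP|/eqP]; [left|right].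
Qed.

Lemma e1_in : e1 \in H1list. Proof. by vm_compute. Qed.
Lemma m1_in : m1 \in H1list. Proof. by vm_compute. Qed.

Lemma pi_e1 : pi e1 = 1%g.
Proof.
apply/permP => i; rewrite perm1 piE ?e1_in //.
by case: (ordsP i) => [->|[->|[->|->]]]; vm_compute.
Qed.

Lemma pi_m1 : pi m1 = 1%g.
Proof.
apply/permP => i; rewrite perm1 piE ?m1_in //.
by case: (ordsP i) => [->|[->|[->|->]]]; vm_compute.
Qed.

Lemma central_chk : all (fun x => (qmul e1 x == qmul x e1) && (qmul m1 x == qmul x m1)) H1list.
Proof. by vm_compute. Qed.

Lemma idem_chk : all (fun x => (qmul x x == x) ==> (x == e1)) H1list.
Proof. by vm_compute. Qed.

Lemma sq1_chk : all (fun x => (qmul x x == e1) ==> ((x == e1) || (x == m1))) H1list.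
Proof. by vm_compute. Qed.

Definition qi : quat := Q 0 1 0 0.
Lemma qi_in : qi \in H1list. Proof. by vm_compute. Qed.
Lemma qi_sq : qmul qi qi = m1. Proof. by vm_compute. Qed.

Lemma pi_qi_ne1 : pi qi <> 1%g.
Proof.
move=> E; have := congr1 (fun s : {perm 'I_4} => s o0) E.
by rewrite perm1 piE ?qi_in //; vm_compute.
Qed.

Lemma part4 : nonsplit_central_ext_A4 (fun q => H1 q) qmul (Q 1 0 0 0).
Proof.
exists pi; split.
- by move=> x; rewrite H1P; exact: pi_alt.
- by move=> x y; rewrite !H1P; exact: pi_hom.
- move=> s; rewrite Alt_im inE => /mapP[q Hq ->].
  by exists q; rewrite // H1P; exact: (allP Rsub).
- split.
    exists m1; split.
    + by rewrite H1P m1_in.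
    + by move=> /(congr1 qa); vm_compute.
    + exact: pi_m1.
    + exact: pi_e1.
    + by move=> x; rewrite H1P; exact: pi_ker.
  move=> z x; rewrite !H1P => Hz Ez Hx.
  have /andP[/eqP C1' /eqP C2'] := allP central_chk x Hx.
  by case: (pi_ker Hz Ez) => ->.
- case=> sec [Hs Hps Hm].
  have A1 : (1 : {perm 'I_4})%g \in ('Alt_('I_4))%g by rewrite group1.
  have At : pi qi \in ('Alt_('I_4))%g by apply: pi_alt qi_in.
  have S1 : sec 1%g = e1.
    have := Hm _ _ A1 A1; rewrite mulg1 => E.
    have H1s := Hs _ A1; rewrite H1P in H1s.
    by apply/eqP; apply: (implyP (allP idem_chk _ H1s)); rewrite -E.
  have Htt : (pi qi * pi qi)%g = 1%g by rewrite -pi_hom ?qi_in // qi_sq pi_m1.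
  have St : qmul (sec (pi qi)) (sec (pi qi)) = e1 by rewrite -Hm // Htt S1.
  have H1t := Hs _ At; rewrite H1P in H1t.
  have := implyP (allP sq1_chk _ H1t); rewrite St eqxx => /(_ isT) /orP Hor.
  have Pk : pi (sec (pi qi)) = 1%g.
    by case: Hor => /eqP ->; [exact: pi_e1 | exact: pi_m1].
  by apply: pi_qi_ne1; rewrite -(Hps _ At).
Qed.

Definition rhoE (i j : nat) : rat := nth 0 (nth [::] rho_rows i) j / 2.
Definition mkE (sl : seq 'I_4) (el : seq rat) (i j : nat) : rat :=
  if (nth o0 sl i : nat) == j then nth 0 el i else 0.
Definition mkM (sl : seq 'I_4) (el : seq rat) : 'M[rat]_4 :=
  \matrix_(i, j) mkE sl el i j.

Lemma mulE4 (A B : 'M[rat]_4) i j :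
  (A *m B) i j = A i o0 * B o0 j + A i o1 * B o1 j + A i o2 * B o2 j + A i o3 * B o3 j.
Proof. by rewrite mxE sum4. Qed.

Lemma nth_ords {T : Type} (x0 : T) (f : 'I_4 -> T) (i : 'I_4) :
  nth x0 (map f ords) i = f i.
Proof. by case: (ordsP i) => [->|[->|[->|->]]]. Qed.

Definition sT (q : quat) : seq 'I_4 := lk [::] FixS q.
Definition eT (q : quat) : seq rat := lk [::] FixE q.
Definition Mt (q : quat) : 'M[rat]_4 := mkM (sT q) (eT q).

Definition key (x : 'M[rat]_4) : seq rat := [seq x i j | i : 'I_4 <- ords, j : 'I_4 <- ords].
Definition keyE (sl : seq 'I_4) (el : seq rat) : seq rat :=
  [seq mkE sl el i j | i : 'I_4 <- ords, j : 'I_4 <- ords].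
Definition keyMul (a : seq 'I_4) (b : seq rat) (c : seq 'I_4) (d : seq rat) : seq rat :=
  [seq mkE a b i (o0 : nat) * mkE c d (o0 : nat) j + mkE a b i (o1 : nat) * mkE c d (o1 : nat) j
     + mkE a b i (o2 : nat) * mkE c d (o2 : nat) j + mkE a b i (o3 : nat) * mkE c d (o3 : nat) j
   | i : 'I_4 <- ords, j : 'I_4 <- ords].
Definition keys : seq (seq rat) := map (fun q => keyE (sT q) (eT q)) H1list.
Definition fM (x : 'M[rat]_4) : quat := nth e1 H1list (index (key x) keys).

Lemma key_mk sl el : key (mkM sl el) = keyE sl el.
Proof.
rewrite /key /keyE; congr flatten; apply: eq_map => i; apply: eq_map => j.
by rewrite mxE.
Qed.

Lemma key_mul a b c d : key (mkM a b *m mkM c d) = keyMul a b c d.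
Proof.
rewrite /key /keyMul; congr flatten; apply: eq_map => i; apply: eq_map => j.
by rewrite mulE4 !mxE.
Qed.

Lemma keys_chk : all (fun q => nth e1 H1list (index (keyE (sT q) (eT q)) keys) == q) H1list.
Proof. by vm_compute. Qed.

Lemma fM_Mt q : q \in H1list -> fM (Mt q) = q.
Proof. by move=> Hq; rewrite /fM /Mt key_mk; apply/eqP; exact: (allP keys_chk). Qed.

Lemma mul_chk : all (fun p => all (fun q =>
   nth e1 H1list (index (keyMul (sT p) (eT p) (sT q) (eT q)) keys) == qmul p q) H1list) H1list.
Proof. by vm_compute. Qed.

Lemma fM_mul p q : p \in H1list -> q \in H1list -> fM (Mt p *m Mt q) = qmul p q.
Proof.
move=> Hp Hq; rewrite /fM /Mt key_mul; apply/eqP; exact: (allP (allP mul_chk p Hp) q Hq).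
Qed.

Definition commE (sl : seq 'I_4) (el : seq rat) : bool :=
  all (fun i : 'I_4 => all (fun j : 'I_4 =>
    rhoE i (o0 : nat) * mkE sl el (o0 : nat) j + rhoE i (o1 : nat) * mkE sl el (o1 : nat) j
    + rhoE i (o2 : nat) * mkE sl el (o2 : nat) j + rhoE i (o3 : nat) * mkE sl el (o3 : nat) j ==
    mkE sl el i (o0 : nat) * rhoE (o0 : nat) j + mkE sl el i (o1 : nat) * rhoE (o1 : nat) j
    + mkE sl el i (o2 : nat) * rhoE (o2 : nat) j + mkE sl el i (o3 : nat) * rhoE (o3 : nat) j)
    ords) ords.

Lemma commEP sl el : commE sl el <-> rho *m mkM sl el = mkM sl el *m rho.
Proof.
split.
  move=> /allP H; apply/matrixP => i j; rewrite !mulE4 !mxE.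
  exact/eqP/(allP (H i (mem_ords i)) j (mem_ords j)).
move=> H; apply/allP => i _; apply/allP => j _.
by have := congr1 (fun M : 'M[rat]_4 => M i j) H; rewrite /= !mulE4 !mxE => ->.
Qed.

Lemma rho_unit : rho \in unitmx.
Proof.
have : rho *m rho^T = 1%:M.
  apply/matrixP => i j; rewrite mulE4 !mxE.
  by case: (ordsP i) => [->|[->|[->|->]]]; case: (ordsP j) => [->|[->|[->|->]]]; vm_compute.
by case/mulmx1_unit.
Qed.

Definition signs : seq rat := [:: 1; -1].

Lemma fix_chk : all (fun a => all (fun b => all (fun c => all (fun d =>
   all (fun ea => all (fun eb => all (fun ec => all (fun ed =>
     (uniq [:: a; b; c; d] && (ea * eb * ec * ed == 1) && commE [:: a; b; c; d] [:: ea; eb; ec; ed])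
     ==> has (fun q => (sT q == [:: a; b; c; d]) && (eT q == [:: ea; eb; ec; ed])) H1list)
   signs) signs) signs) signs) ords) ords) ords) ords.
Proof. by vm_compute. Qed.

Lemma FixChar x : FixRho x -> exists2 q, q \in H1list & x = Mt q.
Proof.
case=> [[e [s [He Hp Hx]]] Hc].
have Ex : x = mkM (map s ords) (map e ords).
  apply/matrixP => i j; rewrite Hx mul_diag_mx !mxE /mkE !nth_ords.
  by rewrite -val_eqE; case: eqP => _; rewrite /= ?mulr1 ?mulr0.
have Hcomm : rho *m x = x *m rho.
  by rewrite -{2}Hc -mulmxA mulVmx ?rho_unit // mulmx1.
rewrite Ex in Hcomm; move/commEP: Hcomm => Hcomm.
have Hs : uniq (map s ords) by rewrite map_inj_uniq //; exact: perm_inj.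
have Hpr : e o0 * e o1 * e o2 * e o3 == 1 by rewrite -prod4 Hp.
have Hsg k : e k \in signs by case: (He k) => ->.
have := fix_chk.
move=> /allP /(_ _ (mem_ords (s o0))) /allP /(_ _ (mem_ords (s o1)))
  /allP /(_ _ (mem_ords (s o2))) /allP /(_ _ (mem_ords (s o3))).
move=> /allP /(_ _ (Hsg o0)) /allP /(_ _ (Hsg o1)) /allP /(_ _ (Hsg o2))
  /allP /(_ _ (Hsg o3)) /implyP.
have Hs' : uniq [:: s o0; s o1; s o2; s o3] := Hs.
have Hc' : commE [:: s o0; s o1; s o2; s o3] [:: e o0; e o1; e o2; e o3] := Hcomm.
rewrite Hs' Hpr Hc' => /(_ isT) /hasP [q Hq /andP[/eqP E1 /eqP E2]].
by exists q => //; rewrite Ex /Mt E1 E2.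
Qed.

Lemma mkWD4 sl el : uniq sl && (size sl == 4%N) -> size el == 4%N ->
  all (fun a => a \in signs) el ->
  nth 0 el 0 * nth 0 el 1 * nth 0 el 2 * nth 0 el 3 == 1 -> WD4 (mkM sl el).
Proof.
move=> Hsl /eqP Hse Hall Hpr.
exists (fun i => nth 0 el i), (mkperm sl); split.
- move=> i; have : nth 0 el i \in signs by apply: (allP Hall); apply: mem_nth; rewrite Hse.
  by rewrite !inE => /orP[/eqP->|/eqP->]; [left|right].
- by rewrite prod4; apply/eqP.
- apply/matrixP => i j; rewrite mul_diag_mx !mxE (mkpermE Hsl).
  rewrite /mkE val_eqE; case: eqP => _ ; by rewrite ?mulr1 ?mulr0.
Qed.

Lemma valid_chk : all (fun q => [&& uniq (sT q) && (size (sT q) == 4%N), size (eT q) == 4%N,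
   all (fun a => a \in signs) (eT q),
   nth 0 (eT q) 0 * nth 0 (eT q) 1 * nth 0 (eT q) 2 * nth 0 (eT q) 3 == 1 &
   commE (sT q) (eT q)]) H1list.
Proof. by vm_compute. Qed.

Lemma Mt_fix q : q \in H1list -> FixRho (Mt q).
Proof.
move=> Hq; have /and5P[V1 V2 V3 V4 V5] := allP valid_chk q Hq.
split; first exact: mkWD4.
move/commEP: V5 => V5; rewrite /Mt V5 mulmxK //; exact: rho_unit.
Qed.

Lemma part1 : iso_on FixRho mulmx (fun q => H1 q) qmul.
Proof.
exists fM; split.
- move=> x /FixChar [q Hq ->]; by rewrite (fM_Mt Hq) H1P.
- move=> x y /FixChar [p Hp ->] /FixChar [q Hq ->].
  move=> E; apply: f_equal; exact: (etrans (esym (fM_Mt Hp)) (etrans E (fM_Mt Hq))).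
- move=> q; rewrite H1P => Hq; exists (Mt q); [exact: Mt_fix | exact: fM_Mt].
- move=> x y /FixChar [p Hp ->] /FixChar [q Hq ->].
  exact: (etrans (fM_mul Hp Hq) (congr2 qmul (esym (fM_Mt Hp)) (esym (fM_Mt Hq)))).
Qed.

Theorem proposition5p6 :
  [/\ (* Fix(rho~) is isomorphic to H^1 *)
      iso_on FixRho mulmx (fun q => H1 q) qmul,
      (* H^1 has order 24 *)
      (exists s : seq quat, [/\ uniq s, size s = 24%N & forall q, q \in s = H1 q]),
      (* H^1 is isomorphic to Q_8 x| C_3 *)
      iso_on (fun q => H1 q) qmul SD sdmul
    & (* H^1 is isomorphic to the binary tetrahedral group ~A_4 *)
      nonsplit_central_ext_A4 (fun q => H1 q) qmul (Q 1 0 0 0)].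
Proof. split; [exact: part1 | exact: part2 | exact: part3 | exact: part4]. Qed.
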